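(* Let $p=\frac{2\ell}{2\ell-1}$ for some $\ell\in\mathbb{N}$. Then there exists a real number $C_p>1$ such that for every $\varepsilon\in(0,1)$ we have $$N_p^{\mathrm{disc}}(\varepsilon,d)\ \ge\ C_p^d\,(1+o(1))\qquad\text{as } d\to\infty,$$ i.e. there is a sequence $(r_d)_{d\ge1}$ (possibly depending on $\varepsilon$) with $r_d\to0$ and $N_p^{\mathrm{disc}}(\varepsilon,d)\ge C_p^d(1+r_d)$ for all $d$. In particular, the $L_p$-discrepancy suffers from the curse of dimensionality for all such $p$.
   Context: For a set $\mathcal{P}=\{\boldsymbol{x}_1,\dots,\boldsymbol{x}_N\}$ of $N$ points in $[0,1)^d$, the local discrepancy function is $\Delta_{\mathcal{P}}(\boldsymbol{t})=\frac{|\{k\in\{1,\dots,N\}:\boldsymbol{x}_k\in[\boldsymbol{0},\boldsymbol{t})\}|}{N}-t_1t_2\cdots t_d$ for $\boldsymbol{t}=(t_1,\dots,t_d)\in[0,1]^d$, where $[\boldsymbol{0},\boldsymbol{t})=[0,t_1)\times\cdots\times[0,t_d)$. For $p\in[1,\infty)$ the $L_p$-discrepancy is $L_{p,N}(\mathcal{P})=\left(\int_{[0,1]^d}|\Delta_{\mathcal{P}}(\boldsymbol{t})|^p\,d\boldsymbol{t}\right)^{1/p}$. The $N$-th minimal $L_p$-discrepancy is $\mathrm{disc}_p(N,d)=\min_{\mathcal{P}}L_{p,N}(\mathcal{P})$, the minimum over all $N$-element point sets in $[0,1)^d$, and the initial discrepancy is $\mathrm{disc}_p(0,d)=\left(\int_{[0,1]^d}(t_1\cdots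 t_d)^p\,d\boldsymbol{t}\right)^{1/p}=(p+1)^{-d/p}$. The inverse of the minimal $L_p$-discrepancy is $N_p^{\mathrm{disc}}(\varepsilon,d)=\min\{N\in\mathbb{N}:\mathrm{disc}_p(N,d)\le\varepsilon\,\mathrm{disc}_p(0,d)\}$ for $d\in\mathbb{N}$, $\varepsilon\in(0,1)$. *)

(* Defs.v *)
From Stdlib Require Import Reals.
From Coquelicot Require Import Coquelicot.
Open Scope R_scope.

(* x^p for x >= 0 and real p > 0, with the convention 0^p = 0
   (Stdlib's Rpower is only meaningful for positive bases). *)
Definition rpow (x p : R) : R := if Rle_dec x 0 then 0 else Rpower x p.

(* A point set of N points in dimension d: P k i = i-th coordinate of point k
   (only k < N, i < d matter). *)
Definition admissible (N d : nat) (P : nat -> nat -> R) : Prop :=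
  forall k i, (k < N)%nat -> (i < d)%nat -> 0 <= P k i < 1.

Fixpoint in_box (d : nat) (x t : nat -> R) : bool :=
  match d with
  | O => true
  | S d' => in_box d' x t &&
            (if Rle_dec 0 (x d') then (if Rlt_dec (x d') (t d') then true else false)
             else false)
  end.

Fixpoint count_box (N d : nat) (P : nat -> nat -> R) (t : nat -> R) : nat :=
  match N with
  | O => O
  | S N' => (count_box N' d P t + (if in_box d (P N') t then 1 else 0))%nat
  end.

Fixpoint prod_coord (d : nat) (t : nat -> R) : R :=
  match d with
  | O => 1
  | S d' => prod_coord d' t * t d'
  end.

Definition local_disc (N d : nat) (P : nat -> nat -> R) (t : nat -> R) : R :=
  INR (count_box N d P t) / INR N - prod_coord d t.

Definition upd (t : nat -> R) (j : nat) (s : R) : nat -> R :=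
  fun i => if Nat.eqb i j then s else t i.

(* integral over [0,1]^d, as an iterated (Riemann) integral, coordinate by coordinate *)
Fixpoint cube_int (d : nat) (f : (nat -> R) -> R) : R :=
  match d with
  | O => f (fun _ => 0)
  | S d' => RInt (fun s => cube_int d' (fun t => f (upd t d' s))) 0 1
  end.

Definition Lp_disc (p : R) (N d : nat) (P : nat -> nat -> R) : R :=
  rpow (cube_int d (fun t => rpow (Rabs (local_disc N d P t)) p)) (1 / p).

Definition disc_min (p : R) (N d : nat) : Rbar :=
  Glb_Rbar (fun x => exists P, admissible N d P /\ x = Lp_disc p N d P).

(* inverse of the minimal L_p-discrepancy N_p^disc(eps,d)
   = min { N : disc_p(N,d) <= eps * disc_p(0,d) }  (as an Rbar; +oo if the set is empty) *)
Definition N_disc (p eps : R) (d : nat) : Rbar :=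
  Glb_Rbar (fun x => exists N : nat, x = INR N /\
              Rbar_le (disc_min p N d) (Rbar_mult (Finite eps) (disc_min p 0 d))).

(* Main.v *)
Require Import Defs.
From Stdlib Require Import Reals Lra Lia List Classical FunctionalExtensionality Bool.
From Coquelicot Require Import Coquelicot.
Open Scope bool_scope.
Open Scope R_scope.


Definition box (j : nat) (t : nat -> R) : Prop := forall i, (i < j)%nat -> 0 <= t i <= 1.

Lemma box_upd j t s : box j t -> 0 <= s <= 1 -> box (S j) (upd t j s).
Proof.
  intros Ht Hs i Hi. unfold upd. destruct (Nat.eqb i j) eqn:E.
  - exact Hs.
  - apply Nat.eqb_neq in E. apply Ht. lia.
Qed.

Lemma box_zero j : box j (fun _ => 0).
Proof. intros i _. lra. Qed.

Fixpoint NI (j : nat) (f : (nat -> R) -> R) : Prop :=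
  match j with
  | O => True
  | S j' => (forall s, 0 <= s <= 1 -> NI j' (fun t => f (upd t j' s))) /\
            ex_RInt (fun s => cube_int j' (fun t => f (upd t j' s))) 0 1
  end.

Lemma cube_int_ext_box j : forall f g, (forall t, box j t -> f t = g t) ->
  cube_int j f = cube_int j g.
Proof.
  induction j as [|j IH]; intros f g H; simpl.
  - apply H, box_zero.
  - apply RInt_ext. intros s Hs. rewrite Rmin_left in Hs by lra. rewrite Rmax_right in Hs by lra.
    apply IH. intros t Ht. apply H. apply box_upd; auto; lra.
Qed.

Lemma NI_ext_box j : forall f g, (forall t, box j t -> f t = g t) -> NI j f -> NI j g.
Proof.
  induction j as [|j IH]; intros f g H Hf; simpl in *; auto.
  destruct Hf as [H1 H2]. split.
  - intros s Hs. apply (IH (fun t => f (upd t j s))); auto.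
    intros t Ht. apply H. apply box_upd; auto.
  - eapply ex_RInt_ext; [|exact H2]. intros s Hs.
    rewrite Rmin_left in Hs by lra. rewrite Rmax_right in Hs by lra.
    apply cube_int_ext_box. intros t Ht. apply H. apply box_upd; auto; lra.
Qed.

Lemma RInt_uniqR (f : R -> R) a b l : is_RInt f a b l -> RInt f a b = l.
Proof. intros H. exact (is_RInt_unique (V:=R_CompleteNormedModule) f a b l H). Qed.

Lemma RInt_lin01 (F G : R -> R) a b : ex_RInt F 0 1 -> ex_RInt G 0 1 ->
  is_RInt (fun s => a * F s + b * G s) 0 1 (a * RInt F 0 1 + b * RInt G 0 1).
Proof.
  intros H1 H2.
  pose proof (RInt_correct (V:=R_CompleteNormedModule) F 0 1 H1) as I1.
  pose proof (RInt_correct (V:=R_CompleteNormedModule) G 0 1 H2) as I2. clear H1 H2.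
  rename I1 into H1. rename I2 into H2.
  apply (is_RInt_scal _ _ _ a) in H1. apply (is_RInt_scal _ _ _ b) in H2.
  exact (is_RInt_plus _ _ _ _ _ _ H1 H2).
Qed.

Lemma cube_int_lin j : forall f g a b, NI j f -> NI j g ->
  NI j (fun t => a * f t + b * g t) /\
  cube_int j (fun t => a * f t + b * g t) = a * cube_int j f + b * cube_int j g.
Proof.
  induction j as [|j IH]; intros f g a b Hf Hg; simpl in *.
  - auto.
  - destruct Hf as [Hf1 Hf2]; destruct Hg as [Hg1 Hg2].
    assert (E : forall s, 0 < s < 1 ->
      a * cube_int j (fun t => f (upd t j s)) + b * cube_int j (fun t => g (upd t j s)) =
      cube_int j (fun t => a * f (upd t j s) + b * g (upd t j s))).
    { intros s Hs. symmetry. apply IH; [apply Hf1|apply Hg1]; lra. }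
    pose proof (RInt_lin01 _ _ a b Hf2 Hg2) as L.
    apply (is_RInt_ext _ (fun s => cube_int j (fun t => a * f (upd t j s) + b * g (upd t j s)))) in L.
    2:{ intros s Hs. rewrite Rmin_left in Hs by lra. rewrite Rmax_right in Hs by lra. apply E; exact Hs. }
    split; [split|].
    + intros s Hs. apply IH; auto.
    + eexists; exact L.
    + apply RInt_uniqR in L. exact L.
Qed.

Lemma cube_int_const j : forall c, NI j (fun _ => c) /\ cube_int j (fun _ => c) = c.
Proof.
  induction j as [|j IH]; intros c; simpl.
  - auto.
  - split; [split|].
    + intros s _. apply IH.
    + eapply ex_RInt_ext; [|apply (ex_RInt_const 0 1 c)].
      intros s _. symmetry; apply IH.
    + rewrite (RInt_ext _ (fun _ => c)). rewrite RInt_const. unfold scal; simpl; unfold mult; simpl. ring.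
      intros; apply IH.
Qed.

Lemma cube_int_mono j : forall f g, NI j f -> NI j g -> (forall t, box j t -> f t <= g t) ->
  cube_int j f <= cube_int j g.
Proof.
  induction j as [|j IH]; intros f g Hf Hg H; simpl in *.
  - apply H, box_zero.
  - destruct Hf as [Hf1 Hf2]; destruct Hg as [Hg1 Hg2].
    apply RInt_le; auto; try lra.
    intros s Hs. apply IH; auto; try (apply Hf1 || apply Hg1); try lra.
    intros t Ht. apply H. apply box_upd; auto; lra.
Qed.

Lemma cube_int_close j f g d : NI j f -> NI j g -> (forall t, box j t -> Rabs (f t - g t) <= d) ->
  Rabs (cube_int j f - cube_int j g) <= d.
Proof.
  intros Hf Hg H.
  destruct (cube_int_const j d) as [Hc Ec].
  destruct (cube_int_lin j g (fun _ => d) 1 1 Hg Hc) as [N1 E1].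
  destruct (cube_int_lin j f (fun _ => d) 1 1 Hf Hc) as [N2 E2].
  assert (A1 : cube_int j f <= cube_int j (fun t => 1 * g t + 1 * d)).
  { apply cube_int_mono; auto. intros t Ht. specialize (H t Ht). apply Rabs_le_between in H. lra. }
  assert (A2 : cube_int j g <= cube_int j (fun t => 1 * f t + 1 * d)).
  { apply cube_int_mono; auto. intros t Ht. specialize (H t Ht). apply Rabs_le_between in H. lra. }
  rewrite E1, Ec in A1. rewrite E2, Ec in A2. apply Rabs_le_between. lra.
Qed.

Definition tst (y s : R) : bool :=
  if Rle_dec 0 y then (if Rlt_dec y s then true else false) else false.

Lemma in_box_S d x t : in_box (S d) x t = in_box d x t && tst (x d) (t d).
Proof. reflexivity. Qed.

Lemma in_box_ext d x t t' : (forall i, (i < d)%nat -> t i = t' i) -> in_box d x t = in_box d x t'.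
Proof.
  induction d; intros H; simpl; auto.
  rewrite IHd by (intros; apply H; lia). rewrite (H d) by lia. reflexivity.
Qed.

Lemma prod_ext d t t' : (forall i, (i < d)%nat -> t i = t' i) -> prod_coord d t = prod_coord d t'.
Proof.
  induction d; intros H; simpl; auto.
  rewrite IHd by (intros; apply H; lia). rewrite (H d) by lia. reflexivity.
Qed.

Lemma upd_lt t j s i : (i < j)%nat -> upd t j s i = t i.
Proof. intros H. unfold upd. destruct (Nat.eqb i j) eqn:E; auto. apply Nat.eqb_eq in E. lia. Qed.

Lemma upd_eq t j s : upd t j s j = s.
Proof. unfold upd. rewrite Nat.eqb_refl. reflexivity. Qed.

Lemma prod_upd j t s : prod_coord (S j) (upd t j s) = prod_coord j t * s.
Proof. simpl. rewrite upd_eq. rewrite (prod_ext j (upd t j s) t); auto. intros; apply upd_lt; auto. Qed.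

Fixpoint cnt (j : nat) (Q : list (nat -> R)) (t : nat -> R) : nat :=
  match Q with
  | nil => O
  | x :: Q' => ((if in_box j x t then 1 else 0) + cnt j Q' t)%nat
  end.

Definition filt (j : nat) (s : R) (Q : list (nat -> R)) := filter (fun x => tst (x j) s) Q.

Lemma cnt_upd j Q t s : cnt (S j) Q (upd t j s) = cnt j (filt j s Q) t.
Proof.
  induction Q as [|x Q IH]; [reflexivity|].
  change (cnt (S j) (x::Q) (upd t j s)) with (((if in_box (S j) x (upd t j s) then 1 else 0) + cnt (S j) Q (upd t j s))%nat).
  rewrite in_box_S, upd_eq, IH. rewrite (in_box_ext j x (upd t j s) t) by (intros; apply upd_lt; auto).
  unfold filt in *. simpl filter. destruct (tst (x j) s).
  - rewrite andb_true_r. reflexivity.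
  - rewrite andb_false_r. reflexivity.
Qed.

Lemma cnt_le j Q t : (cnt j Q t <= length Q)%nat.
Proof. induction Q; simpl; auto. destruct (in_box j a t); lia. Qed.

Lemma filt_len j s Q : (length (filt j s Q) <= length Q)%nat.
Proof. unfold filt. induction Q; simpl; auto. destruct (tst (a j) s); simpl; lia. Qed.

Lemma prod_box j t : box j t -> 0 <= prod_coord j t <= 1.
Proof.
  induction j; intros H; simpl. lra.
  assert (A := IHj (fun i Hi => H i ltac:(lia))). assert (B := H j ltac:(lia)).
  split. apply Rmult_le_pos; lra.
  replace 1 with (1*1) by ring. apply Rmult_le_compat; lra.
Qed.

Definition cls (j : nat) (Q : list (nat -> R)) (Phi : nat -> R -> R) : (nat -> R) -> R :=
  fun t => Phi (cnt j Q t) (prod_coord j t).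

Definition LipC (L : R) (M : nat) (Phi : nat -> R -> R) : Prop :=
  0 <= L /\ forall m u v, (m <= M)%nat -> 0 <= u <= 1 -> 0 <= v <= 1 ->
    Rabs (Phi m u - Phi m v) <= L * Rabs (u - v).

Lemma lip_cont (g : R -> R) K : 0 <= K -> (forall x y, Rabs (g x - g y) <= K * Rabs (x - y)) ->
  forall z, continuous g z.
Proof.
  intros HK H z. apply continuity_pt_filterlim.
  intros eps Heps. exists (eps / (K + 1)). split.
  - apply Rdiv_lt_0_compat; lra.
  - intros x [_ Hx]. simpl in *. unfold Rdist in *.
    eapply Rle_lt_trans. apply H.
    apply Rle_lt_trans with (K * (eps / (K+1))).
    apply Rmult_le_compat_l; lra.
    apply Rlt_le_trans with ((K+1) * (eps / (K+1))).
    apply Rmult_lt_compat_r. apply Rdiv_lt_0_compat; lra. lra.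
    right. field. lra.
Qed.

Lemma cont_exR (g : R -> R) a b : (forall z, continuous g z) -> ex_RInt g a b.
Proof. intros H. apply (ex_RInt_continuous (V:=R_CompleteNormedModule)). intros; apply H. Qed.

Lemma ext_exR (f g : R -> R) a b : a < b -> (forall z, a < z < b -> f z = g z) -> ex_RInt g a b -> ex_RInt f a b.
Proof. intros Hab H. apply ex_RInt_ext. intros x Hx. rewrite Rmin_left in Hx by lra. rewrite Rmax_right in Hx by lra. symmetry; auto. Qed.

Lemma pc_int (f : R -> R) : forall n L a b, (length L <= n)%nat -> a <= b ->
  (forall a' b', a <= a' -> a' < b' -> b' <= b -> (forall c, In c L -> ~ (a' < c < b')) ->
     exists g : R -> R, (forall z, continuous g z) /\ forall z, a' < z < b' -> f z = g z) ->
  ex_RInt f a b.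
Proof.
  induction n as [|n IH]; intros L a b HL Hab H.
  - destruct L; [|simpl in HL; lia].
    destruct (Req_dec a b) as [->|Hne]. apply ex_RInt_point.
    destruct (H a b) as [g [Hg1 Hg2]]; try lra. intros c [].
    apply (ext_exR f g); [lra|auto|]. apply cont_exR; auto.
  - destruct (classic (exists c, In c L /\ a < c < b)) as [[c [Hc1 Hc2]]|Hno].
    + set (L' := remove Req_EM_T c L).
      assert (HL' : (length L' <= n)%nat). { pose proof (remove_length_lt Req_EM_T L c Hc1). unfold L'. lia. }
      apply ex_RInt_Chasles with c.
      * apply (IH L'); auto; try lra. intros a' b' H1 H2 H3 H4. apply H; try lra.
        intros c' Hc'. destruct (Req_dec c' c) as [->|Hne]. lra. apply H4. apply in_in_remove; auto.
      * apply (IH L'); auto; try lra. intros a' b' H1 H2 H3 H4. apply H; try lra.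
        intros c' Hc'. destruct (Req_dec c' c) as [->|Hne]. lra. apply H4. apply in_in_remove; auto.
    + destruct (Req_dec a b) as [->|Hne]. apply ex_RInt_point.
      destruct (H a b) as [g [Hg1 Hg2]]; try lra.
      intros c Hc Hc'. apply Hno. exists c. split; auto.
      apply (ext_exR f g); [lra|auto|]. apply cont_exR; auto.
Qed.

Definition clamp (s : R) := Rmax 0 (Rmin 1 s).

Lemma clamp_01 s : 0 <= clamp s <= 1.
Proof. unfold clamp, Rmax, Rmin. repeat destruct Rle_dec; lra. Qed.

Lemma clamp_id s : 0 <= s <= 1 -> clamp s = s.
Proof. intros. unfold clamp, Rmax, Rmin. repeat destruct Rle_dec; lra. Qed.

Lemma clamp_lip x y : Rabs (clamp x - clamp y) <= Rabs (x - y).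
Proof. unfold clamp, Rmax, Rmin. repeat destruct Rle_dec; unfold Rabs; repeat destruct Rcase_abs; lra.
Qed.

Lemma LipC_scale L M M' Phi lam : LipC L M Phi -> 0 <= lam <= 1 -> (M' <= M)%nat ->
  LipC L M' (fun m u => Phi m (u * lam)).
Proof.
  intros [HL H] Hl HM. split; auto. intros m u v Hm Hu Hv.
  eapply Rle_trans. apply H; try lia.
  split. apply Rmult_le_pos; lra. replace 1 with (1*1) by ring. apply Rmult_le_compat; lra.
  split. apply Rmult_le_pos; lra. replace 1 with (1*1) by ring. apply Rmult_le_compat; lra.
  apply Rmult_le_compat_l; auto. rewrite <- Rmult_minus_distr_r, Rabs_mult.
  rewrite (Rabs_right lam) by lra. replace (Rabs (u - v)) with (Rabs (u-v) * 1) at 2 by ring.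
  apply Rmult_le_compat_l. apply Rabs_pos. lra.
Qed.

Lemma sec_eq j Q Phi s : (fun t => cls (S j) Q Phi (upd t j s)) = cls j (filt j s Q) (fun m u => Phi m (u * s)).
Proof. apply functional_extensionality. intros t. unfold cls. rewrite cnt_upd, prod_upd. reflexivity. Qed.

Lemma tst_same y z s0 a b : ~ (a < y < b) -> a < z < b -> a < s0 < b -> tst y z = tst y s0.
Proof. intros H Hz Hs. unfold tst. repeat destruct Rle_dec; repeat destruct Rlt_dec; auto; exfalso; apply H; lra. Qed.

Lemma filt_same j z s0 Q : (forall x, In x Q -> tst (x j) z = tst (x j) s0) -> filt j z Q = filt j s0 Q.
Proof.
  unfold filt. induction Q as [|x Q IH]; intros H; simpl; auto.
  rewrite (H x (or_introl eq_refl)). rewrite IH; auto. intros; apply H; right; auto.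
Qed.

Lemma cls_NI : forall j Q Phi L, LipC L (length Q) Phi -> NI j (cls j Q Phi).
Proof.
  induction j as [|j IH]; intros Q Phi L HL; simpl; auto.
  split.
  - intros s Hs. rewrite sec_eq. eapply IH. apply LipC_scale with (length Q). exact HL. exact Hs. apply filt_len.
  - apply (pc_int _ (length (map (fun x => x j) Q)) (map (fun x => x j) Q)); auto; try lra.
    intros a' b' H1 H2 H3 H4.
    set (s0 := (a' + b') / 2). set (Q0 := filt j s0 Q).
    assert (HQ0 : (length Q0 <= length Q)%nat) by apply filt_len.
    assert (NIc : forall x, NI j (cls j Q0 (fun m u => Phi m (u * clamp x)))).
    { intros x. eapply IH. apply LipC_scale with (length Q). exact HL. apply clamp_01. exact HQ0. }
    exists (fun x => cube_int j (cls j Q0 (fun m u => Phi m (u * clamp x)))). split.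
    + apply (lip_cont _ L). apply HL. intros x y.
      apply cube_int_close; auto. intros t Ht. unfold cls.
      pose proof (prod_box j t Ht) as Hp. pose proof (clamp_01 x). pose proof (clamp_01 y).
      eapply Rle_trans. apply HL.
      eapply Nat.le_trans. apply cnt_le. auto.
      split. apply Rmult_le_pos; lra. replace 1 with (1*1) by ring. apply Rmult_le_compat; lra.
      split. apply Rmult_le_pos; lra. replace 1 with (1*1) by ring. apply Rmult_le_compat; lra.
      apply Rmult_le_compat_l. apply HL.
      rewrite <- Rmult_minus_distr_l, Rabs_mult. rewrite (Rabs_right (prod_coord j t)) by lra.
      apply Rle_trans with (1 * Rabs (clamp x - clamp y)). apply Rmult_le_compat_r. apply Rabs_pos. lra.
      rewrite Rmult_1_l. apply clamp_lip.
    + intros z Hz. rewrite sec_eq. rewrite clamp_id by lra. f_equal. unfold Q0.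
      rewrite (filt_same j z s0 Q); auto.
      intros x Hx. apply (tst_same _ _ _ a' b'); try (unfold s0; lra).
      apply H4. apply in_map_iff. exists x; auto.
Qed.

Lemma rpow_pos x q : 0 < x -> rpow x q = Rpower x q.
Proof. intros H. unfold rpow. destruct Rle_dec; lra. Qed.

Lemma rpow_0 x q : x <= 0 -> rpow x q = 0.
Proof. intros H. unfold rpow. destruct Rle_dec; lra. Qed.

Lemma rpow_nonneg x q : 0 <= rpow x q.
Proof. unfold rpow. destruct Rle_dec. lra. unfold Rpower. left; apply exp_pos. Qed.

Lemma Rpower_1base e : Rpower 1 e = 1.
Proof. unfold Rpower. rewrite ln_1, Rmult_0_r. apply exp_0. Qed.

Lemma Rpower_le1 c e : 0 < c <= 1 -> 0 <= e -> Rpower c e <= 1.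
Proof. intros. rewrite <- (Rpower_1base e). apply Rle_Rpower_l; lra. Qed.

Lemma rpow_le_self b q : 0 <= b <= 1 -> 1 <= q -> rpow b q <= b.
Proof.
  intros Hb Hq. destruct (Req_dec b 0) as [->|Hne]. rewrite rpow_0; lra.
  rewrite rpow_pos by lra. replace q with (1 + (q-1)) by ring. rewrite Rpower_plus, Rpower_1 by lra.
  replace b with (b*1) at 3 by ring. apply Rmult_le_compat_l. lra. apply Rpower_le1; lra.
Qed.

Lemma rpow_mono a b q : 0 <= a <= b -> 0 <= q -> rpow a q <= rpow b q.
Proof.
  intros Hab Hq. destruct (Req_dec a 0) as [->|Hne]. rewrite (rpow_0 0) by lra. apply rpow_nonneg.
  rewrite !rpow_pos by lra. apply Rle_Rpower_l; lra.
Qed.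

Lemma rpow_plus1 u q : 0 <= u -> rpow u (q+1) = rpow u q * u.
Proof.
  intros H. destruct (Req_dec u 0) as [->|Hne]. rewrite !rpow_0 by lra. ring.
  rewrite !rpow_pos by lra. rewrite Rpower_plus, Rpower_1 by lra. reflexivity.
Qed.

Lemma rpow_mult x y q : 0 <= x -> 0 <= y -> rpow (x*y) q = rpow x q * rpow y q.
Proof.
  intros Hx Hy. destruct (Req_dec x 0) as [->|Hx']. rewrite Rmult_0_l, !(rpow_0 0) by lra. ring.
  destruct (Req_dec y 0) as [->|Hy']. rewrite Rmult_0_r, !(rpow_0 0) by lra. ring.
  assert (0 < x*y) by (apply Rmult_lt_0_compat; lra).
  rewrite !rpow_pos by lra. symmetry. apply Rpower_mult_distr; lra.
Qed.

Lemma rpow_lip_aux a b q : 1 <= q -> 0 <= a <= b -> b <= 1 -> rpow b q - rpow a q <= q * (b - a).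
Proof.
  intros Hq Hab Hb. destruct (Req_dec a 0) as [->|Hne].
  - rewrite (rpow_0 0) by lra. pose proof (rpow_le_self b q ltac:(lra) Hq). nra.
  - destruct (Req_dec a b) as [->|Hne2]. lra.
    rewrite !rpow_pos by lra.
    destruct (MVT_cor2 (fun x => Rpower x q) (fun x => q * Rpower x (q-1)) a b) as [c [Hc1 Hc2]]. lra.
    intros c Hc. apply derivable_pt_lim_power. lra.
    rewrite Hc1. assert (Rpower c (q-1) <= 1) by (apply Rpower_le1; lra).
    assert (0 <= q*(b-a)*(1 - Rpower c (q-1))) by (apply Rmult_le_pos; [apply Rmult_le_pos|]; lra). nra.
Qed.

Lemma rpow_lip a b q : 1 <= q -> 0 <= a <= 1 -> 0 <= b <= 1 -> Rabs (rpow a q - rpow b q) <= q * Rabs (a - b).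
Proof.
  intros Hq Ha Hb. destruct (Rle_dec a b).
  - pose proof (rpow_lip_aux a b q Hq ltac:(lra) ltac:(lra)). pose proof (rpow_mono a b q ltac:(lra) ltac:(lra)).
    rewrite Rabs_left1 by lra. rewrite Rabs_left1 by lra. lra.
  - pose proof (rpow_lip_aux b a q Hq ltac:(lra) ltac:(lra)). pose proof (rpow_mono b a q ltac:(lra) ltac:(lra)).
    rewrite Rabs_right by lra. rewrite Rabs_right by lra. lra.
Qed.

Lemma rpow_derive x q : 0 < x -> is_derive (fun y => rpow y q) x (q * Rpower x (q-1)).
Proof.
  intros Hx. apply (is_derive_ext_loc (fun y => Rpower y q)).
  - apply filter_imp with (fun y => 0 < y). intros y Hy. symmetry; apply rpow_pos; auto.
    apply (open_gt 0). exact Hx.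
  - apply is_derive_Reals. apply derivable_pt_lim_power. exact Hx.
Qed.

Lemma rpow_cont x q : 1 <= q -> 0 <= x -> continuous (fun y => rpow y q) x.
Proof.
  intros Hq Hx. destruct (Req_dec x 0) as [->|Hne].
  - apply continuity_pt_filterlim. intros eps Heps. exists (Rmin 1 eps). split.
    apply Rmin_pos; lra.
    intros y [_ Hy]. simpl in *. unfold Rdist in *. rewrite (rpow_0 0) by lra.
    rewrite Rminus_0_r in *. rewrite Rabs_right by (apply Rle_ge, rpow_nonneg).
    destruct (Rle_dec y 0). rewrite rpow_0 by auto. lra.
    pose proof (Rmin_l 1 eps). pose proof (Rmin_r 1 eps).
    rewrite Rabs_right in Hy by lra.
    pose proof (rpow_le_self y q ltac:(lra) Hq). lra.
  - apply (ex_derive_continuous (K:=R_AbsRing) (V:=R_NormedModule) (fun y => rpow y q) x).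
    eexists. apply rpow_derive. lra.
Qed.

Lemma int_rpow a : 1 <= a -> is_RInt (fun s => rpow s a) 0 1 (/ (a+1)).
Proof.
  intros Ha.
  assert (H := is_RInt_derive (V:=R_CompleteNormedModule) (fun y => / (a+1) * rpow y (a+1)) (fun s => rpow s a) 0 1).
  rewrite Rmin_left in H by lra. rewrite Rmax_right in H by lra.
  replace (/ (a+1)) with (minus (/ (a+1) * rpow 1 (a+1)) (/ (a+1) * rpow 0 (a+1))).
  apply H.
  - intros x Hx. destruct (Req_dec x 0) as [->|Hne].
    + rewrite (rpow_0 0) by lra. apply is_derive_Reals. intros eps Heps.
      exists (mkposreal _ (Rmin_pos 1 eps ltac:(lra) Heps)). intros h Hh0 Hh. simpl in Hh.
      pose proof (Rmin_l 1 eps). pose proof (Rmin_r 1 eps).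
      rewrite Rplus_0_l, (rpow_0 0) by lra. rewrite Rmult_0_r, Rminus_0_r, Rminus_0_r.
      destruct (Rle_dec h 0). rewrite rpow_0 by auto. rewrite Rmult_0_r, Rdiv_0_l, Rabs_R0. auto.
      rewrite Rabs_right in Hh by lra.
      rewrite rpow_plus1 by lra.
      replace (/ (a + 1) * (rpow h a * h) / h) with (/ (a+1) * rpow h a) by (field; lra).
      pose proof (rpow_le_self h a ltac:(lra) Ha). pose proof (rpow_nonneg h a).
      rewrite Rabs_right. apply Rle_lt_trans with (1 * rpow h a). apply Rmult_le_compat_r. lra.
      rewrite <- Rinv_1. apply Rinv_le_contravar; lra. lra.
      apply Rle_ge, Rmult_le_pos. left; apply Rinv_0_lt_compat; lra. lra.
    + replace (rpow x a) with (/ (a+1) * ((a+1) * Rpower x (a+1-1))).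
      apply is_derive_scal. apply rpow_derive. lra.
      replace (a+1-1) with a by ring. rewrite rpow_pos by lra. field. lra.
  - intros x Hx. apply rpow_cont; lra.
  - unfold minus, plus, opp; simpl. rewrite (rpow_0 0) by lra. rewrite rpow_pos by lra. rewrite Rpower_1base. ring.
Qed.

Fixpoint Qof (N : nat) (P : nat -> nat -> R) : list (nat -> R) :=
  match N with O => nil | S N' => P N' :: Qof N' P end.

Lemma Qof_len N P : length (Qof N P) = N.
Proof. induction N; simpl; auto. Qed.

Lemma count_cnt N d P t : count_box N d P t = cnt d (Qof N P) t.
Proof. induction N; simpl; auto. rewrite IHN. lia. Qed.

Lemma cube_int_S j f : cube_int (S j) f = RInt (fun s => cube_int j (fun t => f (upd t j s))) 0 1.
Proof. reflexivity. Qed.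

Lemma RInt_scal_rpow a K : 1 <= a -> RInt (fun s => K * rpow s a) 0 1 = K * / (a+1).
Proof. intros Ha. apply RInt_uniqR. exact (is_RInt_scal _ _ _ K _ (int_rpow a Ha)). Qed.

Lemma prodpow_NI j a : 1 <= a -> NI j (fun t => rpow (prod_coord j t) a).
Proof.
  intros Ha. apply (cls_NI j nil (fun _ u => rpow u a) a). split. lra.
  intros m u v _ Hu Hv. apply rpow_lip; auto.
Qed.

Lemma prodpow_int j a : 1 <= a -> cube_int j (fun t => rpow (prod_coord j t) a) = (/ (a+1)) ^ j.
Proof.
  intros Ha. induction j as [|j IH].
  - simpl. rewrite rpow_pos by lra. apply Rpower_1base.
  - rewrite cube_int_S.
    rewrite (RInt_ext _ (fun s => (/ (a+1))^j * rpow s a)).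
    + rewrite RInt_scal_rpow by auto. simpl. match goal with |- ?x = ?y => change (@eq R x y) end. ring.
    + intros s Hs. rewrite Rmin_left in Hs by lra. rewrite Rmax_right in Hs by lra.
      rewrite (cube_int_ext_box j _ (fun t => rpow s a * rpow (prod_coord j t) a + 0 * rpow (prod_coord j t) a)).
      * destruct (cube_int_lin j _ _ (rpow s a) 0 (prodpow_NI j a Ha) (prodpow_NI j a Ha)) as [_ E].
        rewrite E, IH. match goal with |- ?x = ?y => change (@eq R x y) end. ring.
      * intros t Ht. rewrite prod_upd. pose proof (prod_box j t Ht).
        rewrite rpow_mult by lra. ring.
Qed.

Definition PhiD (p : R) (N : nat) : nat -> R -> R := fun m u => rpow (Rabs (INR m / INR N - u)) p.

Lemma ratio01 m N : (m <= N)%nat -> 0 <= INR m / INR N <= 1.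
Proof.
  intros H. destruct N. replace m with 0%nat by lia. simpl. unfold Rdiv. rewrite Rmult_0_l. lra.
  assert (0 < INR (S N)) by (apply lt_0_INR; lia). pose proof (le_INR _ _ H). pose proof (pos_INR m).
  split. unfold Rdiv. apply Rmult_le_pos. lra. left; apply Rinv_0_lt_compat; lra.
  unfold Rdiv. apply (Rmult_le_reg_r (INR (S N))). lra. rewrite Rmult_assoc, Rinv_l by lra. lra.
Qed.

Lemma PhiD_Lip p N : 1 <= p -> LipC p N (PhiD p N).
Proof.
  intros Hp. split. lra. intros m u v Hm Hu Hv. unfold PhiD.
  pose proof (ratio01 m N Hm).
  eapply Rle_trans. apply rpow_lip; auto.
  split. apply Rabs_pos. apply Rabs_le_between. lra.
  split. apply Rabs_pos. apply Rabs_le_between. lra.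
  apply Rmult_le_compat_l. lra.
  eapply Rle_trans. apply Rabs_triang_inv2. right.
  replace (INR m / INR N - u - (INR m / INR N - v)) with (- (u - v)) by ring. apply Rabs_Ropp.
Qed.

Lemma disc_fun p N d P : (fun t => rpow (Rabs (local_disc N d P t)) p) = cls d (Qof N P) (PhiD p N).
Proof. apply functional_extensionality. intros t. unfold cls, PhiD, local_disc. rewrite count_cnt. reflexivity. Qed.

Lemma pointwise p N m u : 1 <= p -> (m <= N)%nat -> 0 <= u <= 1 ->
  1 * rpow u p + (- (2 * INR N)) * rpow u (p+1) <= rpow (Rabs (INR m / INR N - u)) p.
Proof.
  intros Hp Hm Hu. rewrite rpow_plus1 by lra. pose proof (rpow_nonneg u p) as Hr.
  pose proof (pos_INR N) as HN.
  destruct m as [|m].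
  - simpl INR. unfold Rdiv. rewrite Rmult_0_l, Rminus_0_l, Rabs_Ropp, Rabs_right by lra.
    assert (0 <= 2 * INR N * (rpow u p * u)) by (apply Rmult_le_pos; [lra| apply Rmult_le_pos; lra]). lra.
  - assert (HN1 : 1 <= INR N) by (apply (le_INR 1); lia).
    destruct (Rle_dec (2 * INR N * u) 1) as [Hs|Hs].
    + assert (Hz : 2 * u <= INR (S m) / INR N).
      { apply (Rmult_le_reg_r (INR N)). lra. unfold Rdiv. rewrite (Rmult_assoc (INR (S m))), Rinv_l by lra.
        pose proof (le_INR 1 (S m) ltac:(lia)) as H1. change (INR 1) with 1 in H1. lra. }
      rewrite Rabs_right by lra.
      pose proof (rpow_mono u (INR (S m) / INR N - u) p ltac:(lra) ltac:(lra)).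
      assert (0 <= 2 * INR N * (rpow u p * u)) by (apply Rmult_le_pos; [lra| apply Rmult_le_pos; lra]). lra.
    + pose proof (rpow_nonneg (Rabs (INR (S m) / INR N - u)) p).
      assert (0 <= rpow u p * (2 * INR N * u - 1)) by (apply Rmult_le_pos; lra). nra.
Qed.

Lemma lower_bound p N d P : 1 <= p ->
  (/ (p+1))^d - 2 * INR N * (/ (p+2))^d <= cube_int d (fun t => rpow (Rabs (local_disc N d P t)) p).
Proof.
  intros Hp.
  destruct (cube_int_lin d _ _ 1 (- (2 * INR N)) (prodpow_NI d p Hp) (prodpow_NI d (p+1) ltac:(lra))) as [HN E].
  rewrite prodpow_int, prodpow_int in E by lra.
  replace (p + 1 + 1) with (p+2) in E by ring.
  replace ((/ (p+1))^d - 2 * INR N * (/ (p+2))^d) with (1 * (/ (p+1))^d + - (2 * INR N) * (/ (p+2))^d) by ring.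
  rewrite <- E. apply cube_int_mono; auto.
  - rewrite disc_fun. apply (cls_NI d (Qof N P) (PhiD p N) p). rewrite Qof_len. apply PhiD_Lip; auto.
  - intros t Ht. unfold local_disc. rewrite count_cnt. apply pointwise; auto.
    eapply Nat.le_trans; [apply cnt_le|]. rewrite Qof_len; lia. apply prod_box; auto.
Qed.

Lemma I0_val p d P : 1 <= p -> cube_int d (fun t => rpow (Rabs (local_disc 0 d P t)) p) = (/ (p+1))^d.
Proof.
  intros Hp. rewrite <- (prodpow_int d p Hp). apply cube_int_ext_box. intros t Ht.
  unfold local_disc. simpl count_box. simpl INR. unfold Rdiv. rewrite Rmult_0_l, Rminus_0_l, Rabs_Ropp.
  pose proof (prod_box d t Ht). rewrite Rabs_right by lra. reflexivity.
Qed.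

Lemma glb_lb (E : R -> Prop) m : (forall x, E x -> m <= x) -> Rbar_le (Finite m) (Glb_Rbar E).
Proof. intros H. destruct (Glb_Rbar_correct E) as [_ H2]. apply H2. intros x Hx. simpl. auto. Qed.

Lemma glb_single (E : R -> Prop) v : E v -> (forall x, E x -> x = v) -> Glb_Rbar E = Finite v.
Proof.
  intros Hv H. apply Rbar_le_antisym.
  - destruct (Glb_Rbar_correct E) as [H1 _]. apply H1. auto.
  - apply glb_lb. intros x Hx. rewrite (H x Hx). lra.
Qed.

Lemma disc0_val p d : 1 <= p -> disc_min p 0 d = Finite (rpow ((/ (p+1))^d) (1/p)).
Proof.
  intros Hp. unfold disc_min. apply glb_single.
  - exists (fun _ _ => 0). split. intros k i Hk. lia. unfold Lp_disc. rewrite I0_val; auto.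
  - intros x [P [_ ->]]. unfold Lp_disc. rewrite I0_val; auto.
Qed.

Lemma N_bound p eps d : 1 <= p -> 0 < eps < 1 ->
  Rbar_le (Finite ((1 - Rpower eps p) / 2 * ((p+2)/(p+1))^d)) (N_disc p eps d).
Proof.
  intros Hp He. set (Ep := Rpower eps p). set (A := / (p+1)). set (B := / (p+2)).
  assert (HA : 0 < A) by (apply Rinv_0_lt_compat; lra).
  assert (HB : 0 < B) by (apply Rinv_0_lt_compat; lra).
  assert (HAd : 0 < A^d) by (apply pow_lt; auto).
  assert (HBd : 0 < B^d) by (apply pow_lt; auto).
  assert (HE : 0 < Ep) by (unfold Ep, Rpower; apply exp_pos).
  assert (HE1 : Ep < 1) by (unfold Ep; rewrite <- (Rpower_1base p); apply Rlt_Rpower_l; lra).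
  assert (HCB : ((p+2)/(p+1))^d * B^d = A^d) by (rewrite <- Rpow_mult_distr; f_equal; unfold A, B; field; lra).
  apply glb_lb. intros x [N [-> HN]].
  rewrite disc0_val in HN by auto. simpl in HN. fold A in HN.
  apply Rnot_lt_le. intros Hlt.
  set (m := A^d - 2 * INR N * B^d).
  assert (Hm : Ep * A^d < m).
  { unfold m. assert (2 * INR N * B^d < 2 * ((1 - Ep) / 2 * ((p + 2) / (p + 1)) ^ d) * B^d).
    { apply Rmult_lt_compat_r; auto. lra. }
    replace (2 * ((1 - Ep) / 2 * ((p + 2) / (p + 1)) ^ d) * B ^ d) with ((1-Ep) * (((p + 2) / (p + 1)) ^ d * B ^ d)) in H by field.
    rewrite HCB in H. lra. }
  assert (Hlow : Rbar_le (Finite (rpow m (1/p))) (disc_min p N d)).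
  { apply glb_lb. intros y [P [_ ->]]. unfold Lp_disc. apply rpow_mono.
    split. assert (0 < Ep * A^d) by (apply Rmult_lt_0_compat; auto). lra.
    apply lower_bound; auto. left; apply Rdiv_lt_0_compat; lra. }
  pose proof (Rbar_le_trans _ _ _ Hlow HN) as H. simpl in H.
  assert (HEA : 0 < Ep * A^d) by (apply Rmult_lt_0_compat; auto).
  rewrite !rpow_pos in H by lra.
  assert (H0 : Rpower (Ep * A^d) (1/p) < Rpower m (1/p)) by (apply Rlt_Rpower_l; [apply Rdiv_lt_0_compat; lra | lra]).
  rewrite <- Rpower_mult_distr in H0 by lra.
  unfold Ep in H0. rewrite Rpower_mult in H0. replace (p * (1/p)) with 1 in H0 by (field; lra).
  rewrite Rpower_1 in H0 by lra. lra.
Qed.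

Theorem theorem1 (l : nat) (hl : (1 <= l)%nat) :
  let p := 2 * INR l / (2 * INR l - 1) in
  exists C : R, 1 < C /\
    forall eps : R, 0 < eps < 1 ->
      exists r : nat -> R, is_lim_seq r 0 /\
        forall d : nat, (1 <= d)%nat ->
          Rbar_le (Finite (C ^ d * (1 + r d))) (N_disc p eps d).
Proof.
  intros p.
  assert (Hl : 1 <= INR l) by (apply (le_INR 1); lia).
  assert (Hp : 1 <= p).
  { assert (p = 1 + / (2 * INR l - 1)) by (unfold p; field; lra).
    assert (0 < / (2 * INR l - 1)) by (apply Rinv_0_lt_compat; lra). lra. }
  set (C0 := (p+2)/(p+1)).
  assert (HC0 : 1 < C0).
  { unfold C0. apply (Rmult_lt_reg_r (p+1)). lra. unfold Rdiv. rewrite Rmult_assoc, Rinv_l by lra. lra. }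
  exists ((C0 + 1) / 2). split. lra.
  intros eps He.
  set (k := (1 - Rpower eps p) / 2).
  assert (Hk : 0 < k).
  { unfold k. assert (Rpower eps p < 1) by (rewrite <- (Rpower_1base p); apply Rlt_Rpower_l; lra). lra. }
  set (dl := ((C0 + 1) / 2) / C0).
  assert (Hdl : 0 < dl < 1).
  { unfold dl. split. apply Rdiv_lt_0_compat; lra.
    apply (Rmult_lt_reg_r C0). lra. unfold Rdiv at 1. rewrite Rmult_assoc, Rinv_l by lra. lra. }
  exists (fun d => (- / k) * dl ^ d). split.
  - replace (Finite 0) with (Rbar_mult (- / k) 0) by (simpl; f_equal; ring).
    apply is_lim_seq_scal_l. apply is_lim_seq_geom. rewrite Rabs_right; lra.
  - intros d Hd. eapply Rbar_le_trans; [|apply N_bound; auto]. simpl.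
    fold k. fold C0.
    assert (HCd : ((C0 + 1) / 2) = dl * C0) by (unfold dl; field; lra).
    rewrite HCd, Rpow_mult_distr.
    assert (Hx : 0 <= dl ^ d) by (apply pow_le; lra).
    assert (Hy : 0 < C0 ^ d) by (apply pow_lt; lra).
    set (x := dl ^ d) in *. set (y := C0 ^ d) in *.
    assert (Hq : x * (1 + - / k * x) <= k).
    { set (w := x / k). replace (x * (1 + - / k * x)) with (k * (w - w * w)) by (unfold w; field; lra).
      assert (w - w*w <= 1) by nra. nra. }
    replace (x * y * (1 + - / k * x)) with (y * (x * (1 + - / k * x))) by ring.
    replace (k * y) with (y * k) by ring. apply Rmult_le_compat_l; lra.
Qed.
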